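(* Let $n\ge 2$ be an integer and let $A$ be an uncountable compact subset of $(L_n,\tau_E|_{L_n})$. Then $(X_n,\tau(A))$ is perfect but not Lindelöf, and likewise $(X_n,\tau(L_n\setminus A))$ is perfect but not Lindelöf.
   Context: For $\overline{x},\overline{a}\in\mathbb R^n$ let $|\overline{x}-\overline{a}|$ be the Euclidean distance and $B(\overline{a},\epsilon)=\{\overline{x}\in\mathbb R^n:|\overline{x}-\overline{a}|<\epsilon\}$. Let $P_n=\{\overline{x}\in\mathbb R^n: x_n>0\}$, $L_n=\{\overline{x}\in\mathbb R^n: x_n=0\}$, $X_n=P_n\cup L_n$, and let $\tau_E$ denote the Euclidean topology on $X_n$. For $\overline{a}\in L_n$ and $\epsilon>0$ put $\overline{a(\epsilon)}=(a_1,\dots,a_{n-1},\epsilon)$ and $\tilde B(\overline{a},\epsilon)=\{\overline{a}\}\cup B(\overline{a(\epsilon)},\epsilon)$. For $A\subseteq L_n$, the topology $\tau(A)$ on $X_n$ is generated by the local bases: at $\overline{a}\in P_n$, the sets $B(\overline{a},\epsilon)$ with $0<\epsilon<a_n$; at $\overline{a}\in A$, the sets $B(\overline{a},\epsilon)\cap X_n$ with $\epsilon>0$; at $\overline{a}\in L_n\setminus A$, the sets $\tilde B(\overline{a},\epsilon)$ with $\epsilon>0$. A space is perfect if every closed set is a $G_\delta$-set. *)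

(* Defs.v *)
From HB Require Import structures.
From mathcomp Require Import all_boot all_order all_algebra.
From mathcomp Require Import all_classical all_reals all_analysis.
Set Implicit Arguments. Unset Strict Implicit. Unset Printing Implicit Defensive.
Import Order.TTheory GRing.Theory Num.Theory.
Import numFieldNormedType.Exports.
Local Open Scope classical_set_scope.
Local Open Scope ring_scope.

Section Space.
Variables (R : realType) (n : nat).
Notation pt := 'rV[R]_n.

(* k-th coordinate (0-based, as a nat index); 0 if out of range *)
Definition coord (x : pt) (k : nat) : R :=
  match @insub _ (fun i => i < n)%N 'I_n k with Some i => x ord0 i | None => 0 end.

Definition lastc (x : pt) : R := coord x n.-1.

Definition edist (x a : pt) : R := Num.sqrt (\sum_(i < n) (x ord0 i - a ord0 i) ^+ 2).
Definition eball (a : pt) (e : R) : set pt := [set x | edist x a < e].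

Definition Pn : set pt := [set x | 0 < lastc x].
Definition Ln : set pt := [set x | lastc x = 0].
Definition Xn : set pt := Pn `|` Ln.

Definition lift_pt (a : pt) (e : R) : pt :=
  \row_(i < n) (if (i : nat) == n.-1 then e else a ord0 i).

Definition tball (a : pt) (e : R) : set pt := [set a] `|` eball (lift_pt a e) e.

Definition tau_base (A : set pt) (x : pt) : set (set pt) :=
  [set B | (Pn x /\ exists e, 0 < e < lastc x /\ B = eball x e)
        \/ (A x /\ exists e, 0 < e /\ B = eball x e `&` Xn)
        \/ ((Ln `\` A) x /\ exists e, 0 < e /\ B = tball x e)].

Definition tau_open (A : set pt) (U : set pt) : Prop :=
  U `<=` Xn /\ forall x, U x -> exists2 B, tau_base A x B & B `<=` U.

Definition tau_closed (A : set pt) (F : set pt) : Prop :=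
  F `<=` Xn /\ tau_open A (Xn `\` F).

Definition tau_Gdelta (A : set pt) (F : set pt) : Prop :=
  exists U : nat -> set pt, (forall k, tau_open A (U k)) /\ F = \bigcap_k U k.

Definition tau_perfect (A : set pt) : Prop :=
  forall F, tau_closed A F -> tau_Gdelta A F.

Definition tau_Lindelof (A : set pt) : Prop :=
  forall C : set (set pt), (forall U, C U -> tau_open A U) -> Xn `<=` \bigcup_(U in C) U ->
    exists2 D : set (set pt), D `<=` C /\ countable D & Xn `<=` \bigcup_(U in D) U.

End Space.

(* Main.v *)
Require Import Defs.
From HB Require Import structures.
From mathcomp Require Import all_boot all_order all_algebra.
From mathcomp Require Import all_classical all_reals all_analysis.
From mathcomp Require Import lra ring.
Import Order.TTheory GRing.Theory Num.Theory.
Import numFieldNormedType.Exports.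
Local Open Scope classical_set_scope.
Local Open Scope ring_scope.
Set Implicit Arguments. Unset Strict Implicit. Unset Printing Implicit Defensive.
Definition nearr {R : realType} {n : nat} (r : R) (x y : 'rV[R]_n) :=
  forall i : 'I_n, `|x ord0 i - y ord0 i| < r.

Lemma lastcE (R : realType) n (x : 'rV[R]_n) (i : 'I_n) :
  val i = n.-1 -> lastc x = x ord0 i.
Proof.
move=> hi; rewrite /lastc /Defs.coord; case: (@insubP _ (fun i : nat => i < n)%N 'I_n n.-1) => [u _ hu|].
  have -> : u = i by apply: val_inj; rewrite hu hi.
  by [].
by rewrite -hi ltn_ord.
Qed.

Lemma eball_near (R : realType) n (x z : 'rV[R]_n) e :
  Defs.edist z x < e -> nearr e z x.
Proof.
rewrite /Defs.edist => h i; apply: le_lt_trans h.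
rewrite -sqrtr_sqr ler_sqrt; last by apply: sumr_ge0 => j _; exact: sqr_ge0.
rewrite (bigD1 i) //= lerDl; apply: sumr_ge0 => j _; exact: sqr_ge0.
Qed.

Lemma near_eball (R : realType) n (x z : 'rV[R]_n) e r :
  0 < e -> n%:R * r ^+ 2 < e ^+ 2 -> nearr r z x -> Defs.edist z x < e.
Proof.
move=> e0 hr h; rewrite /Defs.edist -[e]gtr0_norm // -sqrtr_sqr ltr_sqrt ?exprn_gt0 //.
apply: le_lt_trans hr.
have -> : n%:R * r ^+ 2 = \sum_(i < n) r ^+ 2.
  by rewrite sumr_const card_ord mulr_natl.
apply: ler_sum => i _.
have := h i; have := normr_ge0 (z ord0 i - x ord0 i).
rewrite -(real_normK (num_real (z ord0 i - x ord0 i))).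
set d := `|_|. move=> h1 h2. nra.
Qed.

Lemma small_pos (R : realType) (a b : R) : 0 < a -> 0 < b ->
  exists e, [/\ 0 < e, e <= a & e < b].
Proof.
move=> a0 b0; exists (Num.min a (b / 2)); split.
- by rewrite lt_min a0 divr_gt0.
- by rewrite ge_min lexx.
- by rewrite gt_min; apply/orP; right; rewrite ltr_pdivrMr // ltr_pMr // ltr1n.
Qed.

Lemma inv_small (R : realType) (c : R) : 0 < c -> exists k : nat, (k.+1%:R)^-1 < c.
Proof.
move=> c0; have ci : 0 < c^-1 by rewrite invr_gt0.
have := archi_boundP (ltW ci) => h.
exists (Num.Def.archi_bound c^-1).
rewrite invf_plt ?posrE ?ltr0n //.
by apply: lt_trans h _; rewrite ltr_nat.
Qed.

Lemma small_r (R : realType) (n : nat) (e : R) : 0 < e ->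
  exists2 c, 0 < c & n%:R * c ^+ 2 < e ^+ 2.
Proof.
move=> e0; set N : R := (n.+1)%:R.
have N0 : 0 < N by rewrite ltr0n.
exists (e / N); first by rewrite divr_gt0.
have hN : n%:R < N * N.
  rewrite /N -natrM ltr_nat; rewrite mulSn; apply: (@leq_trans n.+1) => //.
  by rewrite ltnS leq_addr.
have hc : e / N * N = e by rewrite divfK // gt_eqF.
set c := e / N in hc *.
have c0 : 0 < c by rewrite divr_gt0.
rewrite -hc.
have : 0 < c ^+ 2 * (N * N - n%:R) by rewrite mulr_gt0 ?exprn_gt0 // subr_gt0.
move=> h; rewrite -subr_gt0; apply: lt_le_trans h _.
by rewrite le_eqVlt; apply/orP; left; apply/eqP; rewrite expr2; ring.
Qed.

Definition ilast (n : nat) (hn : (0 < n)%N) : 'I_n := @Ordinal n n.-1 (etrans (ltn_predL n) hn).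

Lemma lastcI (R : realType) n (hn : (0 < n)%N) (x : 'rV[R]_n) : lastc x = x ord0 (ilast hn).
Proof. exact: lastcE. Qed.

Lemma tball_prop (R : realType) n (hn : (0 < n)%N) (t z : 'rV[R]_n) e :
  Ln t -> Defs.eball (lift_pt t e) e z ->
  [/\ 0 < lastc z, lastc z < e *+ 2 & nearr (e *+ 2) z t].
Proof.
rewrite /Ln /= => t0 /eball_near h.
have e0 : 0 < e by apply: le_lt_trans (h (ilast hn)).
have hl := h (ilast hn); rewrite mxE /= eqxx -lastcI in hl.
move: hl; rewrite ltr_distlC => /andP[h1 h2].
split.
- lra.
- rewrite mulr2n; lra.
move=> i; have := h i; rewrite mxE.
case: eqP => hi.
  have -> : t ord0 i = 0 by rewrite -t0 (lastcE t hi).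
  have -> : z ord0 i = lastc z by rewrite (lastcE z hi).
  rewrite subr0 ltr_distlC => /andP[h3 h4].
  rewrite ltr_norml; apply/andP; split; lra.
move=> h3; apply: lt_trans h3 _; rewrite mulr2n ltrDl //.
Qed.

Lemma ball_near (R : realType) n (x z : 'rV[R]_n) e :
  0 < e -> nearr e z x -> ball x e z.
Proof.
move=> e0 h; split => // i j; rewrite (ord1 i) /ball /= distrC; exact: h.
Qed.

Lemma closed_far (R : realType) n (A : set 'rV[R]_n) x :
  closed A -> ~ A x -> exists2 d, 0 < d & forall z, nearr d z x -> ~ A z.
Proof.
move=> cA nAx; have := closed_openC cA; rewrite openE => /(_ x nAx).
rewrite /interior => /nbhs_ballP [d d0 hd]; exists d => // z hz.
exact: (hd z (ball_near d0 hz)).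
Qed.

Notation XX := (@Xn _ _).
Notation PP := (@Pn _ _).
Notation LL := (@Ln _ _).

Definition Eopen (R : realType) n (U : set 'rV[R]_n) :=
  U `<=` XX /\ forall x, U x -> exists2 d, 0 < d & forall z, XX z -> nearr d z x -> U z.

Lemma Eopen_tau (R : realType) n (hn : (0 < n)%N) (B U : set 'rV[R]_n) :
  Eopen U -> tau_open B U.
Proof.
move=> [UX hU]; split => // x Ux.
have [d d0 hd] := hU x Ux.
case: (UX x Ux) => [Px|Lx].
- have [e [e0 ed el]] := small_pos d0 Px.
  exists (Defs.eball x e).
    by left; split => //; exists e; split => //; rewrite e0.
  move=> z /eball_near hz; apply: hd; last by move=> i; apply: lt_le_trans (hz i) ed.
  left; have := hz (ilast hn); rewrite /Pn /= !lastcI in el *.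
  rewrite ltr_distlC => /andP[h1 h2]; lra.
- case: (pselect (B x)) => Bx.
  + exists (Defs.eball x d `&` XX); first by right; left; split => //; exists d.
    by move=> z [/eball_near hz Xz]; apply: hd.
  + exists (tball x (d / 2)); first by right; right; split => //; exists (d / 2); rewrite divr_gt0.
    move=> z [-> //|hz]; have [l0 _ hz'] := tball_prop hn Lx hz.
    apply: hd; first by left.
    by move=> i; have := hz' i; rewrite mulr2n -splitr.
Qed.

Lemma tau_openU (R : realType) n (B U V : set 'rV[R]_n) :
  tau_open B U -> tau_open B V -> tau_open B (U `|` V).
Proof.
move=> [UX hU] [VX hV]; split; first by move=> x [/UX|/VX].
move=> x [/hU [W bW WU]|/hV [W bW WV]]; exists W => // z Wz; [left|right]; auto.
Qed.

Lemma tangent_open (R : realType) n (hn : (0 < n)%N) (B S : set 'rV[R]_n) r :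
  0 < r -> S `<=` LL `\` B ->
  tau_open B (S `|` [set y | PP y /\ lastc y < r]).
Proof.
move=> r0 SLB; split.
  by move=> x [/SLB [Lx _]|[Px _]]; [right|left].
move=> x [Sx|[Px xr]].
- have [Lx nBx] := SLB x Sx.
  exists (tball x (r / 2)); first by right; right; split => //; exists (r / 2); rewrite divr_gt0.
  move=> z [->|hz]; first by left.
  have [l0 l1 _] := tball_prop hn Lx hz; right; split => //.
  by move: l1; rewrite mulr2n -splitr.
- have rx : 0 < r - lastc x by rewrite subr_gt0.
  have [e [e0 ed el]] := small_pos rx Px.
  exists (Defs.eball x e); first by left; split => //; exists e; split => //; rewrite e0.
  move=> z /eball_near hz; right.
  have := hz (ilast hn); rewrite /Pn /= !lastcI in el ed xr *.
  rewrite ltr_distlC => /andP[h1 h2]; split; lra.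
Qed.

Lemma point_open (R : realType) n (hn : (0 < n)%N) (B S : set 'rV[R]_n) s :
  S `<=` LL `\` B -> tau_open B (XX `\` S) -> S s ->
  tau_open B ((XX `\` S) `|` [set s]).
Proof.
move=> SLB [OX hO] Ss; split.
  move=> x [[Xx _]|->] //; right; by case: (SLB s Ss).
move=> x [/hO [W bW WO]|->].
  by exists W => // z /WO; left.
have [Ls nBs] := SLB s Ss.
exists (tball s 1); first by right; right; split => //; exists 1.
move=> z [->|hz]; first by right.
have [l0 _ _] := tball_prop hn Ls hz; left; split; first by left.
by move=> /SLB [Lz _]; move: l0; rewrite Lz ltxx.
Qed.

Lemma Eopen_P (R : realType) n (hn : (0 < n)%N) : Eopen (@Pn R n).
Proof.
split; first by move=> x Px; left.
move=> x Px; exists (lastc x) => // z _ /(_ (ilast hn)).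
rewrite /Pn /= !lastcI in Px *; rewrite ltr_distlC => /andP[h1 h2]; lra.
Qed.

Lemma EopenI (R : realType) n (U V : set 'rV[R]_n) :
  Eopen U -> Eopen V -> Eopen (U `&` V).
Proof.
move=> [UX hU] [VX hV]; split; first by move=> x [/UX].
move=> x [Ux Vx]; have [d1 d10 h1] := hU x Ux; have [d2 d20 h2] := hV x Vx.
have [e [e0 e1 e2]] := small_pos d10 d20.
exists e => // z Xz hz; split; [apply: h1|apply: h2] => // i.
  by apply: lt_le_trans (hz i) e1.
by apply: lt_trans (hz i) e2.
Qed.

Lemma EopenU (R : realType) n (U V : set 'rV[R]_n) :
  Eopen U -> Eopen V -> Eopen (U `|` V).
Proof.
move=> [UX hU] [VX hV]; split; first by move=> x [/UX|/VX].
move=> x [/hU [d d0 h]|/hV [d d0 h]]; exists d => // z Xz hz; [left|right]; auto.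
Qed.

Definition Unear (R : realType) n (c : R) (F : set 'rV[R]_n) :=
  [set x | XX x /\ exists y, F y /\ exists r, r < c /\ nearr r x y].

Lemma Eopen_Unear (R : realType) n (c : R) (F : set 'rV[R]_n) : Eopen (Unear c F).
Proof.
split; first by move=> x [].
move=> x [Xx [y [Fy [r [rc hr]]]]].
have d0 : 0 < (c - r) / 2 by rewrite divr_gt0 // subr_gt0.
exists ((c - r) / 2) => // z Xz hz; split => //; exists y; split => //.
exists (r + (c - r) / 2); split; first lra.
move=> i; have := hz i; have := hr i => h1 h2.
have := ler_distD (x ord0 i) (z ord0 i) (y ord0 i).
rewrite (distrC (z ord0 i)) => h3; lra.
Qed.

Lemma Eopen_closedC (R : realType) n (A : set 'rV[R]_n) :
  closed A -> Eopen (XX `\` A).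
Proof.
move=> cA; split; first by move=> x [].
move=> x [Xx nAx]; have [d d0 hd] := closed_far cA nAx.
by exists d => // z Xz hz; split => //; apply: hd.
Qed.

Lemma PL_false (R : realType) n (x : 'rV[R]_n) : PP x -> LL x -> False.
Proof. by rewrite /Pn /Ln /= => h h2; rewrite h2 ltxx in h. Qed.

Lemma Unear_mono (R : realType) n (c1 c2 : R) (F : set 'rV[R]_n) :
  c1 <= c2 -> Unear c1 F `<=` Unear c2 F.
Proof.
move=> h x [Xx [y [Fy [r [rc hr]]]]]; split => //; exists y; split => //.
by exists r; split => //; apply: lt_le_trans rc h.
Qed.

Lemma Unear_self (R : realType) n (c : R) (F : set 'rV[R]_n) x :
  0 < c -> XX x -> F x -> Unear c F x.
Proof.
move=> c0 Xx Fx; split => //; exists x; split => //; exists (c / 2); split.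
  by rewrite ltr_pdivrMr // ltr_pMr // ltr1n.
by move=> i; rewrite subrr normr0 divr_gt0.
Qed.

Lemma closure_in (R : realType) n (B F : set 'rV[R]_n) x :
  tau_closed B F -> XX x -> (PP x \/ B x) -> (forall c, 0 < c -> Unear c F x) -> F x.
Proof.
move=> [FX [_ hO]] Xx hPB hc; case: (pselect (F x)) => // nFx; exfalso.
have [W bW WO] := hO x (conj Xx nFx).
have [e e0 he] : exists2 e, 0 < e & forall y, XX y -> Defs.edist y x < e -> W y.
  case: bW => [[Px [e [/andP[e0 _] ->]]]|[[Bx [e [e0 ->]]]|[[Lx nBx] _]]].
  - by exists e.
  - by exists e => // y Xy hy; split.
  - by exfalso; case: hPB => [/PL_false/(_ Lx)|]; auto.
have [c c0 hc'] := small_r n e0.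
have [_ [y [Fy [r [rc hr]]]]] := hc c c0.
have Xy := FX y Fy.
have : W y.
  apply: (he y Xy); apply: (near_eball e0 hc').
  by move=> i; rewrite distrC; apply: lt_trans (hr i) rc.
by move=> /WO [_]; apply.
Qed.

Definition ck (R : realType) (k : nat) : R := (k.+1%:R)^-1.

Lemma ck_gt0 (R : realType) k : 0 < ck R k.
Proof. by rewrite /ck invr_gt0 ltr0n. Qed.

Lemma ck_small (R : realType) (c : R) : 0 < c -> exists k, ck R k < c.
Proof. exact: inv_small. Qed.

Lemma all_near (R : realType) n (F : set 'rV[R]_n) x :
  (forall c, 0 < c -> exists k, ck R k < c /\ Unear (ck R k) F x) ->
  forall c, 0 < c -> Unear c F x.
Proof.
move=> h c c0; have [k [kc hk]] := h c c0.
by apply: Unear_mono hk; apply: ltW.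
Qed.

Lemma perfect1 (R : realType) n (hn : (0 < n)%N) (A : set 'rV[R]_n) :
  closed A -> A `<=` LL -> tau_perfect A.
Proof.
move=> cA AL F cF.
pose G k := (Unear (ck R k) F `&` (PP `|` Unear (ck R k) A)) `|`
            ((F `&` (LL `\` A)) `|` [set y | PP y /\ lastc y < ck R k]).
have Gopen : forall k, tau_open A (G k).
  move=> k; apply: tau_openU.
    apply: Eopen_tau => //; apply: EopenI; first exact: Eopen_Unear.
    apply: EopenU; [exact: Eopen_P|exact: Eopen_Unear].
  by apply: tangent_open => //; exact: ck_gt0.
exists G; split => //.
have FX := cF.1.
rewrite eqEsubset; split.
  move=> x Fx k _; have Xx := FX x Fx.
  case: (Xx) => [Px|Lx].
    by left; split; [apply: Unear_self => //; exact: ck_gt0|left].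
  case: (pselect (A x)) => Ax.
    by left; split; [apply: Unear_self => //; exact: ck_gt0|right; apply: Unear_self => //; exact: ck_gt0].
  by right; left.
move=> x Hx; case: (pselect (F x)) => // nFx; exfalso.
have Xx : XX x := (Gopen 0%N).1 x (Hx 0%N I).
case: (Xx) => [Px|Lx].
- apply nFx; apply: (closure_in cF Xx (or_introl Px)).
  apply: all_near => c c0.
  have [e [e0 ec ex]] := small_pos c0 Px.
  have [k hk] := ck_small e0; exists k; split; first by apply: lt_le_trans hk ec.
  case: (Hx k I) => [[hU _]|[[Fx _]|[_ hl]]]; [exact: hU|by case: nFx|].
  by have := lt_trans hl (lt_trans hk ex); rewrite ltxx.
- case: (pselect (A x)) => Ax.
    apply nFx; apply: (closure_in cF Xx (or_intror Ax)).
    apply: all_near => c c0; have [k hk] := ck_small c0; exists k; split => //.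
    case: (Hx k I) => [[hU _]|[[Fx _]|[Px _]]]; [exact: hU|by case: nFx|].
    by case: (PL_false Px Lx).
  have [d d0 hd] := closed_far cA Ax.
  have [k hk] := ck_small d0.
  case: (Hx k I) => [[_ [Px|]]|[[Fx _]|[Px _]]]; try by case: (PL_false Px Lx).
  2: by case: nFx.
  move=> [_ [y [Ay [r [rc hr]]]]]; apply: (hd y) Ay.
  by move=> i; rewrite distrC; apply: lt_trans (hr i) (lt_trans rc hk).
Qed.

Lemma perfect2 (R : realType) n (hn : (0 < n)%N) (A : set 'rV[R]_n) :
  closed A -> A `<=` LL -> tau_perfect (LL `\` A).
Proof.
move=> cA AL F cF.
pose G k := (Unear (ck R k) F `&` (XX `\` A)) `|`
            ((F `&` A) `|` [set y | PP y /\ lastc y < ck R k]).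
have Gopen : forall k, tau_open (LL `\` A) (G k).
  move=> k; apply: tau_openU.
    apply: Eopen_tau => //; apply: EopenI; first exact: Eopen_Unear.
    exact: Eopen_closedC.
  apply: tangent_open => //; first exact: ck_gt0.
  by move=> x [_ Ax]; split; [exact: AL|move=> [_]].
exists G; split => //.
have FX := cF.1.
rewrite eqEsubset; split.
  move=> x Fx k _; have Xx := FX x Fx.
  case: (pselect (A x)) => Ax; first by right; left.
  by left; split; [apply: Unear_self => //; exact: ck_gt0|].
move=> x Hx; case: (pselect (F x)) => // nFx; exfalso.
have Xx : XX x := (Gopen 0%N).1 x (Hx 0%N I).
case: (Xx) => [Px|Lx].
- apply nFx; apply: (closure_in cF Xx (or_introl Px)).
  apply: all_near => c c0.
  have [e [e0 ec ex]] := small_pos c0 Px.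
  have [k hk] := ck_small e0; exists k; split; first by apply: lt_le_trans hk ec.
  case: (Hx k I) => [[hU _]|[[Fx _]|[_ hl]]]; [exact: hU|by case: nFx|].
  by have := lt_trans hl (lt_trans hk ex); rewrite ltxx.
- have nAx : ~ A x.
    case: (Hx 0%N I) => [[_ [_ //]]|[[Fx _]|[Px _]]]; first by case: nFx.
    by case: (PL_false Px Lx).
  apply nFx; apply: (closure_in cF Xx (or_intror (conj Lx nAx))).
  apply: all_near => c c0; have [k hk] := ck_small c0; exists k; split => //.
  case: (Hx k I) => [[hU _]|[[Fx _]|[Px _]]]; [exact: hU|by case: nFx|].
  by case: (PL_false Px Lx).
Qed.

Lemma notLind (R : realType) n (hn : (0 < n)%N) (B S : set 'rV[R]_n) :
  S `<=` LL `\` B -> tau_open B (XX `\` S) -> ~ countable S -> ~ tau_Lindelof B.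
Proof.
move=> SLB oS nS HL.
pose C := [set (XX `\` S) `|` [set s] | s in S].
have [s0 Ss0] : exists s, S s.
  apply: contrapT => h; apply: nS; rewrite (_ : S = set0) //.
  by apply/seteqP; split => // x Sx; apply: h; exists x.
have Copen : forall U, C U -> tau_open B U.
  by move=> U [s Ss <-]; exact: point_open.
have Ccov : XX `<=` \bigcup_(U in C) U.
  move=> x Xx; case: (pselect (S x)) => Sx.
    by exists ((XX `\` S) `|` [set x]); [exists x|right].
  by exists ((XX `\` S) `|` [set s0]); [exists s0|left].
have [D [DC cD] cov] := HL C Copen Ccov.
apply: nS.
have : countable (\bigcup_(U in D) (U `&` S)).
  apply: bigcup_countable => // U /DC [s Ss <-].
  apply: (sub_countable (subset_card_le _) (countable1 s)).
  by move=> x [[[_ nSx]|->]].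
apply: sub_countable; apply: subset_card_le => x Sx.
have [U DU Ux] := cov x (or_intror (proj1 (SLB x Sx))).
by exists U.
Qed.

Lemma coord_le_norm (R : realType) n (a : 'rV[R]_n) i : `|a ord0 i| <= `|a|.
Proof.
rewrite (_ : `|a| = mx_norm a) // mx_normrE; apply/bigmax_geP; right => /=.
by exists (ord0, i).
Qed.

Lemma compact_coord_bound (R : realType) n (A : set 'rV[R]_n) i :
  compact A -> exists M : R, 0 < M /\ forall a, A a -> `|a ord0 i| < M.
Proof.
move=> /compact_bounded [M [Mreal hM]].
exists (`|M| + 2); split; first by rewrite ltr_wpDl.
move=> a Aa; apply: le_lt_trans (coord_le_norm a i) _.
have h1 : M < `|M| + 1 by apply: le_lt_trans (real_ler_norm Mreal) _; rewrite ltrDl.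
apply: le_lt_trans (hM _ h1 a Aa) _; rewrite ltrD2l; lra.
Qed.

Unset Implicit Arguments.

Theorem mainTheorem17 (R : realType) (n : nat) (hn : (2 <= n)%N)
    (A : set 'rV[R]_n) (hAL : A `<=` (@Ln R n)) (hAc : compact A)
    (hAu : ~ countable A) :
  (tau_perfect A /\ ~ tau_Lindelof A) /\
  (tau_perfect ((@Ln R n) `\` A) /\ ~ tau_Lindelof ((@Ln R n) `\` A)).
Proof.
have hn0 : (0 < n)%N by apply: leq_trans hn.
have cA : closed A := compact_closed (@norm_hausdorff _ _) hAc.
split; split.
- exact: perfect1.
- pose i0 : 'I_n := Ordinal hn0.
  have [M [M0 hM]] := compact_coord_bound i0 hAc.
  pose v : 'rV[R]_n := \row_(i < n) (if i == i0 then M *+ 2 else 0).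
  pose f := fun a : 'rV[R]_n => a + v.
  have fE : forall a i, f a ord0 i = a ord0 i + (if i == i0 then M *+ 2 else 0).
    by move=> a i; rewrite /f !mxE.
  have hl0 : (ilast hn0 == i0) = false.
    apply/negbTE; apply/eqP => /(congr1 val) /= h.
    by move: hn; rewrite -(prednK hn0) h.
  have SLB : f @` A `<=` LL `\` A.
    move=> _ [a Aa <-]; split.
      by rewrite /Ln /= lastcI fE hl0 addr0 -lastcI; exact: hAL.
    move=> /hM; rewrite fE eqxx; have := hM a Aa.
    rewrite !ltr_norml => /andP[h1 h2] /andP[h3 h4]; lra.
  have cS : closed (f @` A).
    apply: compact_closed; first exact: norm_hausdorff.
    apply: continuous_compact => //; apply: continuous_subspaceT => x.
    exact: (cvgD cvg_id (cvg_cst v)).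
  apply: (notLind hn0 SLB).
    by apply: Eopen_tau => //; exact: Eopen_closedC.
  move=> cS'; apply: hAu.
  have /countable_injP [g hg] := cS'.
  apply/countable_injP; exists (g \o f) => a b Aa Ab /= hab.
  have : f a = f b.
    apply: hg; [apply: mem_set; exists a; [exact: set_mem Aa|by []]|apply: mem_set; exists b; [exact: set_mem Ab|by []]|exact: hab].
  by move/addIr.
- exact: perfect2.
- apply: (notLind hn0 (S := A)).
  + by move=> x Ax; split; [exact: hAL|move=> [_]].
  + by apply: Eopen_tau => //; exact: Eopen_closedC.
  + exact: hAu.
Qed.
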